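(* Let $d\geq 1$ and $c\geq 0$ be integers. Let $R_{d,c}$ be the set of all two-dimensional decompositions with parameters $b=2$, $d$, $c$ (of any integer $w\in\{0,\dots,2dc\}$), i.e. the set of all $2\times d$ matrices with entries in $\{0,\dots,c\}$ weakly decreasing along rows and down columns. Let $FBT_{d,c+1}$ be the set of finite full binary trees with exactly $c+1$ left fathers (the root included) and exactly $d$ right fathers. Then there is a bijection between $R_{d,c}$ and $FBT_{d,c+1}$.
   Context: Two-dimensional decomposition: given integers $d\geq1$, $b\geq 1$, $c\geq 0$, $w\geq 0$, a two-dimensional decomposition of $w$ with parameters $d,b,c$ is a $b\times d$ matrix $(a_{i,j})$ with all $a_{i,j}\in\{0,\dots,c\}$, weakly decreasing along each row and down each column, with $\sum a_{i,j}=w$. A full binary tree is a finite rooted planar tree in which every vertex has either no children or exactly two children (a left child and a right child). The root is regarded as a left vertex; left children are left vertices and right children are right vertices. A father is a vertex with two children; left (resp. right) fathers are fathers that are left (resp. right) vertices. *)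

(* Defs.v *)
From mathcomp Require Import all_boot all_order all_algebra.
Set Implicit Arguments. Unset Strict Implicit. Unset Printing Implicit Defensive.

Definition two_dim_decomp (d b c w : nat) (A : 'M[nat]_(b, d)) : Prop :=
  (forall i j, A i j <= c) /\
  (forall (i : 'I_b) (j j' : 'I_d), j <= j' -> A i j' <= A i j) /\
  (forall (i i' : 'I_b) (j : 'I_d), i <= i' -> A i' j <= A i j) /\
  (\sum_(i < b) \sum_(j < d) A i j)%N = w.

Definition R_dc (d c : nat) : Type :=
  {A : 'M[nat]_(2, d) | exists w : nat, @two_dim_decomp d 2 c w A}.

Inductive fbtree : Type :=
| Leaf : fbtree
| Node : fbtree -> fbtree -> fbtree.

(* Number of left (resp. right) fathers in a subtree whose root is a left
   vertex iff isl = true. *)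
Fixpoint lfathers (t : fbtree) (isl : bool) : nat :=
  match t with
  | Leaf => 0
  | Node l r => (isl : nat) + lfathers l true + lfathers r false
  end.

Fixpoint rfathers (t : fbtree) (isl : bool) : nat :=
  match t with
  | Leaf => 0
  | Node l r => ((~~ isl) : nat) + rfathers l true + rfathers r false
  end.

(* The root is regarded as a left vertex. *)
Definition left_fathers (t : fbtree) : nat := lfathers t true.
Definition right_fathers (t : fbtree) : nat := rfathers t true.

Definition FBT (d k : nat) : Type :=
  {t : fbtree | left_fathers t = k /\ right_fathers t = d}.

(* Main.v *)
Require Import Defs.
From mathcomp Require Import all_boot all_order all_algebra.
From mathcomp Require Import zify.
From Stdlib Require Import ProofIrrelevance ClassicalEpsilon.
Set Implicit Arguments. Unset Strict Implicit. Unset Printing Implicit Defensive.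

Fixpoint psi (t : fbtree) : seq bool :=
  match t with Leaf => [:: false] | Node l r => true :: psi l ++ psi r end.

Definition step (b : bool) (o : option (seq fbtree)) : option (seq fbtree) :=
  match o with
  | None => None
  | Some St => if b then (match St with l :: r :: S' => Some (Node l r :: S') | _ => None end)
              else Some (Leaf :: St)
  end.

Definition dec (w : seq bool) := foldr step (Some [::]) w.

Lemma foldr_psi t S : foldr step (Some S) (psi t) = Some (t :: S).
Proof.
elim: t S => [|l IHl r IHr] S //=.
by rewrite foldr_cat IHr IHl.
Qed.

Lemma dec_flatten w S : dec w = Some S -> flatten (map psi S) = w.
Proof.
elim: w S => [|b w IH] S /=; first by case=> <-.
rewrite /dec /=; case E: (foldr step (Some [::]) w) => [S'|] //=.
have := IH S' E => {}IH.
case: b.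
- case: S' E IH => [|l [|r S'']] //= E IH [<-] /=.
  by rewrite -IH /= catA.
- by case=> <- /=; rewrite IH.
Qed.

Fixpoint sc (w : seq bool) : bool :=
  if w is x :: s then (count id w < count negb w) && sc s else true.

Lemma dec_sc w S : dec w = Some S -> sc w && (count id w + size S == count negb w).
Proof.
elim: w S => [|b w IH] S /=; first by case=> <-.
rewrite /dec /=; case E: (foldr step (Some [::]) w) => [S'|] //=.
have /andP[scw /eqP H] := IH S' E.
case: b.
- case: S' E H => [|l [|r S'']] //= E H [<-] /=.
  rewrite scw andbT; apply/andP; split; apply/eqP || idtac; lia.
- case=> <- /=. rewrite scw andbT; apply/andP; split; [lia|apply/eqP; lia].
Qed.

Lemma sc_dec w : sc w -> exists S, dec w = Some S /\ count id w + size S = count negb w.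
Proof.
elim: w => [|b w IH] /=; first by exists [::].
case/andP=> lt /IH [S' [E H]].
rewrite /dec /= -/(dec w) E.
case: b lt => /= lt.
- case: S' E H => [|l [|r S'']] //= E H; try lia.
  exists (Node l r :: S''); split => //=; lia.
- exists (Leaf :: S'); split => //=; lia.
Qed.

Definition tr (w : seq bool) : fbtree :=
  match dec w with Some [:: t] => t | _ => Leaf end.

Lemma tr_psi t : tr (psi t) = t.
Proof. by rewrite /tr /dec foldr_psi. Qed.

Lemma psi_tr w : sc w -> count negb w = (count id w).+1 -> psi (tr w) = w.
Proof.
move=> /sc_dec [S [E H]] H2.
have : size S = 1 by lia.
rewrite /tr E; case: S E {H} => [|t [|]] //= E _.
by have := dec_flatten E => /=; rewrite cats0.
Qed.

Lemma dec_psi_sc t : sc (psi t) /\ count negb (psi t) = (count id (psi t)).+1.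
Proof.
have /andP[-> /eqP H] := dec_sc (foldr_psi t [::]).
rewrite /= in H; split => //; lia.
Qed.

Fixpoint pk (s : seq bool) : nat :=
  if s is x :: s' then (x && ~~ head true s') + pk s' else 0.

Lemma last_psi t x0 : last x0 (psi t) = false.
Proof. by elim: t x0 => [|l IHl r IHr] x0 //=; rewrite last_cat IHr. Qed.

Lemma pk_cat x y : last true x = false -> pk (x ++ y) = pk x + pk y.
Proof.
elim: x => [|a [|a' x''] IH] //=.
- by move=> ->.
- by move=> H; have /= -> := IH H; rewrite addnA.
Qed.

Lemma ct_psi t b : count id (psi t) = lfathers t b + rfathers t b.
Proof.
elim: t b => [|l IHl r IHr] b //=.
rewrite count_cat (IHl true) (IHr false); case: b => /=; lia.
Qed.

Lemma pk_psi t b :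
  pk (psi t) = rfathers t b + (b && (if t is Node _ _ then true else false)).
Proof.
elim: t b => [|l IHl r IHr] b /=; first by rewrite andbF.
rewrite pk_cat ?last_psi // (IHl true) (IHr false) /=.
case: l {IHl} => [|l1 l2] /=; case: b => /=; lia.
Qed.

Fixpoint gen (pt pb : nat) (ts bs : seq nat) : seq bool :=
  match ts, bs with
  | t :: ts', b :: bs' => nseq (pb - b).+1 true ++ nseq (pt - t).+1 false ++ gen t b ts' bs'
  | _, _ => nseq pb.+1 true ++ nseq pt.+2 false
  end.

Fixpoint okc (pt pb : nat) (ts bs : seq nat) : bool :=
  match ts, bs with
  | [::], [::] => true
  | t :: ts', b :: bs' => [&& t <= pt, b <= pb, b <= t & okc t b ts' bs']
  | _, _ => false
  end.

Lemma sc_nseqT i z : sc z -> i + count id z < count negb z -> sc (nseq i true ++ z).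
Proof.
elim: i => [|i IH] //= H1 H2.
rewrite IH //; last lia.
rewrite andbT /= !count_cat !count_nseq /=. lia.
Qed.

Lemma sc_nseqF j z : sc z -> count id z <= count negb z -> sc (nseq j false ++ z).
Proof.
elim: j => [|j IH] //= H1 H2.
rewrite IH // andbT /= !count_cat !count_nseq /=. lia.
Qed.

Lemma pk_nseqF v z : pk (nseq v false ++ z) = pk z.
Proof. by elim: v. Qed.

Lemma pk_run u v z : pk (nseq u.+1 true ++ nseq v.+1 false ++ z) = (pk z).+1.
Proof.
elim: u => [|u IH] /=; first by rewrite pk_nseqF.
by have /= -> := IH.
Qed.

Lemma gen_props pt pb ts bs : okc pt pb ts bs -> pb <= pt ->
  [/\ sc (gen pt pb ts bs), count id (gen pt pb ts bs) = pb + size ts + 1,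
      count negb (gen pt pb ts bs) = pt + size ts + 2,
      pk (gen pt pb ts bs) = (size ts).+1 & head false (gen pt pb ts bs) = true].
Proof.
elim: ts pt pb bs => [|t ts IH] pt pb [|b bs] Hok Hle //.
- change (gen pt pb [::] [::]) with (nseq pb.+1 true ++ nseq pt.+2 false).
  split => //.
  + apply: sc_nseqT; first by rewrite -[nseq pt.+2 false]cats0; apply: sc_nseqF.
    rewrite ?count_cat !count_nseq /=; lia.
  + rewrite !count_cat !count_nseq /=; lia.
  + rewrite !count_cat !count_nseq /=; lia.
  + by rewrite -[nseq pt.+2 false]cats0 pk_run.
- change (gen pt pb (t :: ts) (b :: bs)) with
     (nseq (pb - b).+1 true ++ nseq (pt - t).+1 false ++ gen t b ts bs).
  case/and4P: Hok => h1 h2 h3 hok.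
  have [sc1 c1 c2 p1 _] := IH t b bs hok h3.
  split => //.
  + apply: sc_nseqT; first by apply: sc_nseqF => //; lia.
    rewrite !count_cat !count_nseq /=; lia.
  + rewrite !count_cat !count_nseq /=; lia.
  + rewrite !count_cat !count_nseq /=; lia.
  + by rewrite pk_run p1.
Qed.

Lemma nseq_cat_inj (x : bool) u u' s1 s2 :
  nseq u x ++ s1 = nseq u' x ++ s2 -> head (~~ x) s1 = ~~ x -> head (~~ x) s2 = ~~ x ->
  u = u' /\ s1 = s2.
Proof.
elim: u u' => [|u IH] [|u'] /= E H1 H2 //.
- by rewrite E /= in H1; case: (x) H1.
- by rewrite -E /= in H2; case: (x) H2.
- by case: E => /IH /(_ H1 H2) [-> ->].
Qed.

Lemma okc_size pt pb ts bs : okc pt pb ts bs -> size ts = size bs.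
Proof.
by elim: ts pt pb bs => [|t ts IH] pt pb [|b bs] //= /and4P[_ _ _ /IH ->].
Qed.

Lemma gen_inj pt pb ts1 bs1 ts2 bs2 : okc pt pb ts1 bs1 -> okc pt pb ts2 bs2 -> pb <= pt ->
  gen pt pb ts1 bs1 = gen pt pb ts2 bs2 -> ts1 = ts2 /\ bs1 = bs2.
Proof.
elim: ts1 pt pb bs1 ts2 bs2 => [|t1 ts1 IH] pt pb bs1 ts2 bs2 ok1 ok2 hle E.
- have [_ c1 _ _ _] := gen_props ok1 hle.
  have [_ c2 _ _ _] := gen_props ok2 hle.
  rewrite E c2 /= in c1; clear c2.
  have s2 : size ts2 = 0 by lia.
  case: ts2 ok2 {E c1} s2 => // ok2 _.
  by case: bs1 ok1 => //; case: bs2 ok2.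
- have [_ c1 _ _ _] := gen_props ok1 hle.
  have [_ c2 _ _ _] := gen_props ok2 hle.
  rewrite E c2 in c1; clear c2.
  case: ts2 bs1 bs2 ok1 ok2 E c1 => [|t2 ts2] [|b1 bs1] [|b2 bs2] //= ok1 ok2 E c1; try lia.
  case/and4P: ok1 => a1 a2 a3 ok1; case/and4P: ok2 => a1' a2' a3' ok2.
  have [_ _ _ _ hd1] := gen_props ok1 a3.
  have [_ _ _ _ hd2] := gen_props ok2 a3'.
  have E0 : nseq (pb - b1).+1 true ++ (nseq (pt - t1).+1 false ++ gen t1 b1 ts1 bs1) =
            nseq (pb - b2).+1 true ++ (nseq (pt - t2).+1 false ++ gen t2 b2 ts2 bs2) := E.
  case: (nseq_cat_inj E0) => // eu E'.
  case: (nseq_cat_inj E') => //.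
  + by case: (gen t1 b1 ts1 bs1) hd1.
  + by case: (gen t2 b2 ts2 bs2) hd2.
  move=> ev E''.
  have eb : b1 = b2 by lia.
  have et : t1 = t2 by lia.
  subst b2 t2.
  by case: (IH _ _ _ _ _ ok1 ok2 a3 E'') => -> ->.
Qed.

Lemma runs (b : bool) w : exists k s, w = nseq k b ++ s /\ head (~~ b) s = ~~ b.
Proof.
elim: w => [|x w [k [s [E H]]]]; first by exists 0, [::].
case: (eqVneq x b) => [->|nx].
- by exists k.+1, s; rewrite E.
- exists 0, (x :: w); split => //=.
  by case: x b nx {E H} => [] [].
Qed.

Lemma sc_cat_r x y : sc (x ++ y) -> sc y.
Proof. by elim: x => //= a x IH /andP[_ /IH]. Qed.

Lemma pk_le_ct w : pk w <= count id w.
Proof. elim: w => //= x w IH; case: x => /=; lia. Qed.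

Lemma pk_pos r : sc r -> r <> [::] -> head true r = true -> 0 < pk r.
Proof.
elim: r => // x r IH /= /andP[H1 H2] _ hx; subst x.
case: r IH H1 H2 => [|y r] IH H1 H2 //=.
case: y IH H1 H2 => /= IH H1 H2; last lia.
have := IH H2 ltac:(done) erefl. lia.
Qed.

Lemma gen_surj m : forall pt pb w, sc w -> head false w = true ->
  count id w = pb + m + 1 -> count negb w = pt + m + 2 -> pk w = m.+1 ->
  exists ts bs, [/\ okc pt pb ts bs, size ts = m & gen pt pb ts bs = w].
Proof.
elim: m => [|m' IH] pt pb w scw hw ct cf pkw;
  have [u [s [E1 H1]]] := runs true w;
  have [v [r [E2 H2]]] := runs false s;
  subst w s;
  (have upos : 0 < u by case: u hw H1 {ct cf pkw scw} => //= hw H1; rewrite H1 in hw);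
  (have vpos : 0 < v by
    case: v H1 cf {ct pkw scw hw} => // H1 cf;
    case: r H1 H2 cf => [|y r] /= H1 H2; [rewrite !count_cat !count_nseq /=; lia|
                                         by rewrite H1 in H2]);
  (have [u' Eu] : exists u', u = u'.+1 by exists u.-1; lia);
  (have [v' Ev] : exists v', v = v'.+1 by exists v.-1; lia);
  subst u v;
  rewrite pk_run in pkw;
  rewrite !count_cat !count_nseq /= in ct cf.
- case: r hw H1 H2 ct cf pkw scw => [|y r] hw H1 H2 ct cf pkw scw.
  + exists [::], [::]; split => //.
    rewrite /= in ct cf; have -> : u' = pb by lia.
    have -> : v' = pt.+1 by lia.
    by rewrite cats0.
  + have := @pk_pos (y :: r) (sc_cat_r (sc_cat_r scw)) ltac:(done) H2. lia.
- have scr := sc_cat_r (sc_cat_r scw).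
  case: r hw H1 H2 ct cf pkw scw scr => [|y r] hw H1 H2 ct cf pkw scw scr.
  + simpl in pkw; lia.
  have pkr : pk (y :: r) = m'.+1 by case: pkw.
  have := pk_le_ct (y :: r); rewrite pkr => pkle.
  have ltr : count id (y :: r) < count negb (y :: r) by case/andP: scr.
  set b := pb - u'. set t := pt - v'.
  have [ts [bs [ok sz E]]] := IH t b (y :: r) scr
    ltac:(by move: H2 => /= ->) ltac:(rewrite /b; lia) ltac:(rewrite /t; lia) pkr.
  exists (t :: ts), (b :: bs); split => //=.
  + rewrite ok andbT; apply/and3P; split; rewrite /t /b; lia.
  + by rewrite sz.
  + have -> : pb - b = u' by rewrite /b; lia.
    have -> : pt - t = v' by rewrite /t; lia.
    by rewrite E.
Qed.

Lemma okc_nth pt pb ts bs : okc pt pb ts bs ->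
  size ts = size bs /\ [/\ (forall i, nth 0 ts i <= pt), (forall i, nth 0 bs i <= pb),
      (forall i j, i <= j -> nth 0 ts j <= nth 0 ts i),
      (forall i j, i <= j -> nth 0 bs j <= nth 0 bs i) &
      (forall i, nth 0 bs i <= nth 0 ts i)].
Proof.
elim: ts pt pb bs => [|t ts IH] pt pb [|b bs] //=.
- by move=> _; split => //; split => // *; rewrite nth_nil.
- case/and4P=> h1 h2 h3 /IH [s1 [tp bp tm bm bt]].
  split; first by rewrite s1.
  split.
  + by case=> [|i] //=; apply: leq_trans (tp i) h1.
  + by case=> [|i] //=; apply: leq_trans (bp i) h2.
  + case=> [|i] [|j] //= hij; solve [exact: tp | exact: tm].
  + case=> [|i] [|j] //= hij; solve [exact: bp | exact: bm].
  + by case.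
Qed.

Lemma okc_of_nth pt pb ts bs : size ts = size bs ->
  (forall i, i < size ts -> nth 0 ts i <= (if i is i'.+1 then nth 0 ts i' else pt)) ->
  (forall i, i < size ts -> nth 0 bs i <= (if i is i'.+1 then nth 0 bs i' else pb)) ->
  (forall i, i < size ts -> nth 0 bs i <= nth 0 ts i) -> okc pt pb ts bs.
Proof.
elim: ts pt pb bs => [|t ts IH] pt pb [|b bs] //= [sz] ht hb hbt.
rewrite (ht 0) // (hb 0) // (hbt 0) //=.
apply: IH => // => [i hi|i hi|i hi].
- by have := ht i.+1 hi; case: i hi.
- by have := hb i.+1 hi; case: i hi.
- exact: (hbt i.+1).
Qed.

Definition i1 : 'I_2 := Ordinal (ltnSn 1).

Definition rowl d (M : 'M[nat]_(2, d)) (r : 'I_2) : seq nat := [seq M r j | j <- enum 'I_d].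

Lemma size_rowl d (M : 'M[nat]_(2, d)) r : size (rowl M r) = d.
Proof. by rewrite size_map size_enum_ord. Qed.

Lemma nth_rowl d (M : 'M[nat]_(2, d)) r i (h : i < d) : nth 0 (rowl M r) i = M r (Ordinal h).
Proof.
rewrite (nth_map (Ordinal h)) ?size_enum_ord //; congr (M r _); apply: val_inj.
by rewrite /= nth_enum_ord.
Qed.

Lemma nth_rowl' d (M : 'M[nat]_(2, d)) r (j : 'I_d) : nth 0 (rowl M r) j = M r j.
Proof. by rewrite (nth_rowl M r (ltn_ord j)); congr (M r _); apply: val_inj. Qed.

Lemma okc_mx d c w (M : 'M[nat]_(2, d)) : two_dim_decomp c w M -> okc c c (rowl M ord0) (rowl M i1).
Proof.
case=> H1 [H2 [H3 _]].
apply: okc_of_nth; rewrite ?size_rowl // => i hi.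
- rewrite (nth_rowl _ _ hi); case: i hi => [|i] hi; first exact: H1.
  have hi' : i < d by apply: ltnW.
  rewrite (nth_rowl _ _ hi'); exact: (H2 _ (Ordinal hi') (Ordinal hi)).
- rewrite (nth_rowl _ _ hi); case: i hi => [|i] hi; first exact: H1.
  have hi' : i < d by apply: ltnW.
  rewrite (nth_rowl _ _ hi'); exact: (H2 _ (Ordinal hi') (Ordinal hi)).
- by rewrite !(nth_rowl _ _ hi); apply: H3.
Qed.

Definition mx d (ts bs : seq nat) : 'M[nat]_(2, d) :=
  \matrix_(i < 2, j < d) nth 0 (if val i == 0 then ts else bs) j.

Lemma mx_dec d c ts bs : okc c c ts bs ->
  two_dim_decomp c (\sum_(i < 2) \sum_(j < d) mx d ts bs i j) (mx d ts bs).
Proof.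
case/okc_nth=> sz [tp bp tm bm bt].
split; [|split; [|split]] => //.
- move=> i j; rewrite mxE; case: (val i == 0); [exact: tp | exact: leq_trans (bt _) (tp _)].
- move=> i j j' hj; rewrite !mxE; case: (val i == 0); [exact: tm | exact: bm].
- move=> [[|[|k]] hi] [[|[|k']] hi'] j //= _; rewrite !mxE //=.
Qed.

Lemma rowl_mx d ts bs : size ts = d -> size bs = d ->
  rowl (mx d ts bs) ord0 = ts /\ rowl (mx d ts bs) i1 = bs.
Proof.
move=> st sb; split; apply: (@eq_from_nth _ 0); rewrite ?size_rowl //;
  move=> i hi; have hi' : i < d by move: hi; rewrite ?size_rowl.
- by rewrite (nth_rowl _ _ hi') mxE.
- by rewrite (nth_rowl _ _ hi') mxE.
Qed.

Lemma ord2_cases (i : 'I_2) : i = ord0 \/ i = i1.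
Proof.
case: i => [[|[|k]] hi]; [left|right|by []]; exact: val_inj.
Qed.

Lemma mx_eq d (M1 M2 : 'M[nat]_(2, d)) :
  rowl M1 ord0 = rowl M2 ord0 -> rowl M1 i1 = rowl M2 i1 -> M1 = M2.
Proof.
move=> E0 E1; apply/matrixP => i j.
by rewrite -!nth_rowl'; case: (ord2_cases i) => ->; rewrite ?E0 ?E1.
Qed.

Lemma inj_surj_bij (A B : Type) (f : A -> B) :
  injective f -> (forall y, exists x, f x = y) -> bijective f.
Proof.
move=> fi fs.
pose g y := proj1_sig (constructive_indefinite_description _ (fs y)).
have gK : cancel g f by move=> y; rewrite /g; case: constructive_indefinite_description.
exists g => // x; apply: fi; exact: gK.
Qed.

Lemma FBT_inj d k (x y : FBT d k) : proj1_sig x = proj1_sig y -> x = y.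
Proof.
case: x => t [h1 h2]; case: y => t' [h1' h2'] /= E; subst t'.
by congr exist; congr conj; apply: eq_irrelevance.
Qed.

Lemma stats_ok d c t : count id (psi t) = c + d + 1 -> pk (psi t) = d.+1 ->
  left_fathers t = c.+1 /\ right_fathers t = d.
Proof.
rewrite (ct_psi t true) (pk_psi t true) /left_fathers /right_fathers.
case: t => [|l r] /=; first lia.
move=> h1 h2; split; lia.
Qed.

Definition fmapM d c (M : 'M[nat]_(2, d)) : fbtree := tr (gen c c (rowl M ord0) (rowl M i1)).

Lemma psi_fmapM d c (M : 'M[nat]_(2, d)) : okc c c (rowl M ord0) (rowl M i1) ->
  psi (fmapM c M) = gen c c (rowl M ord0) (rowl M i1) /\
  count id (gen c c (rowl M ord0) (rowl M i1)) = c + d + 1 /\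
  pk (gen c c (rowl M ord0) (rowl M i1)) = d.+1.
Proof.
move=> ok; have [sc1 c1 c2 p1 _] := gen_props ok (leqnn c).
rewrite size_rowl in c1 c2 p1.
split; last by [].
apply: psi_tr => //; lia.
Qed.

Lemma fmap_ok d c (A : R_dc d c) :
  left_fathers (fmapM c (proj1_sig A)) = c.+1 /\ right_fathers (fmapM c (proj1_sig A)) = d.
Proof.
case: A => M [w Hw] /=.
have [E [c1 p1]] := psi_fmapM (okc_mx Hw).
by apply: stats_ok; rewrite E.
Qed.

Theorem theorem2p1 (d c : nat) (hd : 1 <= d) :
  exists f : R_dc d c -> FBT d c.+1, bijective f.
Proof.
exists (fun A => exist _ (fmapM c (proj1_sig A)) (fmap_ok A)).
apply: inj_surj_bij.
- move=> [M1 [w1 p1]] [M2 [w2 p2]] /(congr1 (@proj1_sig _ _)) /= E.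
  have [E1 _] := psi_fmapM (okc_mx p1).
  have [E2 _] := psi_fmapM (okc_mx p2).
  have := congr1 psi E; rewrite E1 E2 => G.
  have [R0 R1] := gen_inj (okc_mx p1) (okc_mx p2) (leqnn c) G.
  have EM := mx_eq R0 R1; subst M2.
  by congr exist; apply: proof_irrelevance.
- move=> [t [hl hr]].
  have [sc0 cf0] := dec_psi_sc t.
  have ct0 : count id (psi t) = c + d + 1.
    by rewrite (ct_psi t true); rewrite /left_fathers /right_fathers in hl hr; lia.
  have [l [r Et]] : exists l r, t = Node l r by case: t {sc0 cf0 ct0} hl hr => // l r; exists l, r.
  have pk0 : pk (psi t) = d.+1.
    by rewrite (pk_psi t true) Et /=; rewrite /right_fathers Et /= in hr; lia.
  have hw : head false (psi t) = true by rewrite Et.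
  have cf1 : count negb (psi t) = c + d + 2 by lia.
  have [ts [bs [ok sz E]]] := @gen_surj d c c (psi t) sc0 hw ct0 cf1 pk0.
  have szb : size bs = d by rewrite -(okc_size ok).
  have [R0 R1] := rowl_mx sz szb.
  exists (exist _ (mx d ts bs) (ex_intro (fun w => two_dim_decomp c w (mx d ts bs)) _ (mx_dec d ok))).
  apply: FBT_inj => /=.
  by rewrite /fmapM R0 R1 E tr_psi.
Qed.
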